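(* Let $t \ge 1$ and $b \ge 0$ be integers, $T$ a finite non-empty subset of $\mathbb{Z}^b$, and $f : \mathbb{Z}^b \to \mathbb{Z}$ a function. Then there is a function $g : \mathbb{Z}^b \to \{0,\dots,t-1\}$ such that for each $x \in \mathbb{Z}^b$, $\sum_{y\in T} g(x-y) \equiv f(x) \pmod t$.
   Context: $\mathbb{Z}^0$ is the trivial group. *)

(* Defs.v *)
From mathcomp Require Import all_boot all_order all_algebra.
Set Implicit Arguments.
Unset Strict Implicit.
Unset Printing Implicit Defensive.
(* Z^b is represented as row vectors 'rV[int]_b (a zmodType); 'rV[int]_0 is
   the trivial group. *)

(* Main.v *)
Require Import Defs.
From mathcomp Require Import all_boot all_order all_algebra.
From mathcomp Require Import zify ring lra.
Import Order.TTheory GRing.Theory Num.Theory.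
Local Open Scope ring_scope.

Definition measv (D p : int) : nat :=
  if D <= p then (absz (p - D)).+1
  else if p < 0 then absz p else 0%N.
Lemma measv_up (D a m c M : int) : D = M - m -> D <= a -> m < c -> c <= M ->
  (measv D (a + m - c) < measv D a)%N.
Proof.
move=> -> h1 h2 h3; rewrite /measv h1.
case: ifP => h4; first lia.
case: ifP => h5; lia.
Qed.
Lemma measv_down (D a m c M : int) : D = M - m -> ~~ (D <= a) -> (0 < measv D a)%N -> m <= c -> c < M ->
  (measv D (a + M - c) < measv D a)%N.
Proof.
move=> -> h1; rewrite /measv (negbTE h1).
case: ifP => h0 // _ h2 h3.
case: ifP => h4; first lia.
case: ifP => h5; lia.
Qed.

Section Constr.
Variables (b t : nat) (T : seq 'rV[int]_b) (f : 'rV[int]_b -> int)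
  (phi : 'rV[int]_b -> int) (ymin ymax : 'rV[int]_b).
Hypothesis phiB : forall v w, phi (v - w) = phi v - phi w.
Hypothesis tpos : (0 < t)%N.
Hypothesis Tmin : ymin \in T.
Hypothesis Tmax : ymax \in T.
Hypothesis Huniq : uniq T.
Hypothesis Hmin : forall y, y \in T -> y != ymin -> phi ymin < phi y.
Hypothesis Hmax : forall y, y \in T -> y != ymax -> phi y < phi ymax.
Let D := phi ymax - phi ymin.

Definition meas (z : 'rV[int]_b) : nat := measv D (phi z).

Definition step (k : 'rV[int]_b -> nat) (z : 'rV[int]_b) : nat :=
  if D <= phi z then
    absz ((f (z + ymin) - \sum_(y <- T | y != ymin) (k (z + ymin - y))%:Z) %% t)%Z
  else
    absz ((f (z + ymax) - \sum_(y <- T | y != ymax) (k (z + ymax - y))%:Z) %% t)%Z.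

Fixpoint hh (n : nat) : 'rV[int]_b -> nat :=
  match n with
  | 0%N => fun _ => 0%N
  | n'.+1 => fun z => if meas z == n'.+1 then step (hh n') z else hh n' z
  end.

Definition gg z := hh (meas z) z.

Lemma hh_stable n z : (meas z <= n)%N -> hh n z = gg z.
Proof.
rewrite /gg; elim: n => [|n IH] /=.
  by rewrite leqn0 => /eqP ->.
case: (eqVneq (meas z) n.+1) => [E|Hne] Hle; first by rewrite E /= E eqxx.
apply: IH.
by rewrite leq_eqVlt (negbTE Hne) /= ltnS in Hle.
Qed.

Lemma phiD v w : phi (v + w) = phi v + phi w.
Proof.
have h0 : phi 0 = 0 by have := phiB 0 0; rewrite !subrr.
have hN u : phi (- u) = - phi u by rewrite -sub0r phiB h0 sub0r.
by have := phiB v (- w); rewrite hN !opprK.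
Qed.

Lemma modt_abs (a : int) : ((absz (a %% t)%Z)%:Z = (a %% t)%Z).
Proof.
have : 0 <= (a %% t)%Z by apply: modz_ge0; rewrite eqz_nat -lt0n.
by move=> h; lia.
Qed.

Lemma gg_step z : (0 < meas z)%N -> gg z = step gg z.
Proof.
rewrite {1}/gg; case Em: (meas z) => [//|k] _ /=.
rewrite Em eqxx /step.
have lemax y : y \in T -> phi y <= phi ymax.
  by move=> yT; case: (y =P ymax) => [->//|/eqP ne]; apply/ltW/Hmax.
have gemin y : y \in T -> phi ymin <= phi y.
  by move=> yT; case: (y =P ymin) => [->//|/eqP ne]; apply/ltW/Hmin.
case: ifP => HD.
- congr (absz (_ %% _)%Z); congr (_ - _); rewrite big_seq_cond [RHS]big_seq_cond; apply: eq_bigr => y /andP [yT ne];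
  congr Posz; apply: hh_stable.
  rewrite -ltnS -Em /meas phiB phiD.
  by apply: (@measv_up D (phi z) (phi ymin) (phi y) (phi ymax)) => //; [exact: Hmin | exact: lemax].
- congr (absz (_ %% _)%Z); congr (_ - _); rewrite big_seq_cond [RHS]big_seq_cond; apply: eq_bigr => y /andP [yT ne];
  congr Posz; apply: hh_stable.
  have mpos : (0 < measv D (phi z))%N by rewrite -/(meas z) Em.
  rewrite -ltnS -Em /meas phiB phiD.
  by apply: (@measv_down D (phi z) (phi ymin) (phi y) (phi ymax)) => //; [rewrite HD | exact: gemin | exact: Hmax].
Qed.

Lemma hh_lt n z : (hh n z < t)%N.
Proof.
elim: n z => [|n IH] z /=; first by [].
case: ifP => _ //; rewrite /step.
have tp : (0 < t%:Z) by rewrite ltz_nat.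
by case: ifP => _; [set a := (_ - _) | set a := (_ - _)];
  have := ltz_pmod a tp; have := modz_ge0 a (lt0r_neq0 tp); lia.
Qed.

Lemma gg_eq x : ((\sum_(y <- T) (gg (x - y))%:Z) = f x %[mod t])%Z.
Proof.
have lemax y : y \in T -> phi y <= phi ymax.
  by move=> yT; case: (y =P ymax) => [->//|/eqP ne]; apply/ltW/Hmax.
have Dge : 0 <= D by have := lemax _ Tmin; rewrite /D; lia.
case: (boolP (D <= phi x - phi ymin)) => H.
- have Hz : (0 < meas (x - ymin))%N by rewrite /meas phiB /measv H.
  rewrite (bigD1_seq ymin Tmin Huniq) /= (gg_step _ Hz) /step phiB H modt_abs.
  by rewrite subrK modzDml subrK.
- have H1 : phi x - phi ymax < 0 by move: H; rewrite /D; lia.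
  have H2 : (D <= phi x - phi ymax) = false by lia.
  have Hz : (0 < meas (x - ymax))%N by rewrite /meas phiB /measv H2 H1; lia.
  rewrite (bigD1_seq ymax Tmax Huniq) /= (gg_step _ Hz) /step phiB H2 modt_abs.
  by rewrite subrK modzDml subrK.
Qed.

End Constr.
Lemma exists_max (X : eqType) (s : seq X) (F : X -> int) : s != [::] ->
  exists2 y, y \in s & forall z, z \in s -> F z <= F y.
Proof.
elim: s => [//|x s IH] _.
case: (eqVneq s [::]) => [->|/IH [y ys Hy]].
  by exists x; rewrite ?inE // => z; rewrite inE => /eqP ->.
case: (leP (F x) (F y)) => Hxy.
  exists y; first by rewrite inE ys orbT.
  by move=> z; rewrite inE => /orP [/eqP ->|/Hy].
exists x; first by rewrite inE eqxx.
move=> z; rewrite inE => /orP [/eqP ->//|/Hy h]; exact: (le_trans h (ltW Hxy)).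
Qed.

Lemma le_sum_seq (X : eqType) (s : seq X) (F : X -> int) x :
  (forall z, 0 <= F z) -> x \in s -> F x <= \sum_(z <- s) F z.
Proof.
move=> F0; elim: s => [//|y s IH]; rewrite big_cons inE => /orP [/eqP ->|/IH h].
  by rewrite lerDl sumr_ge0.
by apply: (le_trans h); rewrite lerDr.
Qed.

Lemma horner_zero (M : int) n (a : 'I_n -> int) : 0 < M ->
  (forall i, `|a i| < M) -> \sum_(i < n) a i * M ^+ i = 0 -> forall i, a i = 0.
Proof.
move=> M0; elim: n a => [|n IH] a Ha.
  by move=> _ [].
rewrite big_ord_recl /= expr0 mulr1.
have E : \sum_(i < n) a (lift ord0 i) * M ^+ (lift ord0 i)
         = M * \sum_(i < n) a (lift ord0 i) * M ^+ i.
  by rewrite mulr_sumr; apply: eq_bigr => i _; rewrite lift0 exprS; ring.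
rewrite E; set S := \sum_(i < n) _ => HS.
have HS0 : S = 0.
  apply/eqP; apply: contraT => Sne.
  have h0 := Ha ord0.
  have : a ord0 = - (M * S) by lra.
  move=> e; move: h0; rewrite e normrN normrM (gtr0_norm M0).
  have : 1 <= `|S| by rewrite -gtz0_ge1 normr_gt0.
  by move=> h1 h2; nra.
have a0 : a ord0 = 0 by move: HS; rewrite HS0 mulr0 addr0.
have Hl := IH (fun i => a (lift ord0 i)) (fun i => Ha _) HS0.
by move=> i; case: (unliftP ord0 i) => [j ->|->].
Qed.

Theorem proposition14 (t b : nat) (T : seq 'rV[int]_b) (f : 'rV[int]_b -> int) :
  (1 <= t)%N -> uniq T -> T != [::] ->
  exists g : 'rV[int]_b -> 'I_t,
    forall x : 'rV[int]_b,
      (((\sum_(y <- T) nat_of_ord (g (x - y)%R))%N)%:Z = f x %[mod (t%:Z)])%Z.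
Proof.
move=> t1 uT Tne.
pose S : int := \sum_(y <- T) \sum_(i < b) `|y 0 i|.
pose M : int := 1 + 2 * S.
pose phi (v : 'rV[int]_b) := \sum_(i < b) v 0 i * M ^+ i.
have phiB v w : phi (v - w) = phi v - phi w.
  by rewrite /phi -sumrB; apply: eq_bigr => i _; rewrite !mxE mulrBl.
have S0 : 0 <= S by apply: sumr_ge0 => y _; apply: sumr_ge0.
have M0 : 0 < M by rewrite /M; lra.
have bnd y : y \in T -> forall i, `|y 0 i| <= S.
  move=> yT i.
  apply: le_trans (@le_sum_seq _ T (fun y => \sum_(i < b) `|y 0 i|) y _ yT);
    last by move=> z; apply: sumr_ge0.
  apply: (@le_sum_seq _ _ (fun i => `|y 0 i|)) => //; exact: mem_index_enum.
have inj y y' : y \in T -> y' \in T -> phi y = phi y' -> y = y'.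
  move=> yT y'T e; apply/eqP; rewrite -subr_eq0; apply/eqP/matrixP => i j.
  rewrite (ord1 i) [RHS]mxE.
  have H0 : phi (y - y') = 0 by rewrite phiB e subrr.
  apply: (@horner_zero M b (fun j => (y - y') 0 j) M0 _ H0).
  move=> k; rewrite mxE.
  have h1 := bnd _ yT k; have h2 := bnd _ y'T k.
  have h3 := ler_normB (y 0 k) (y' 0 k).
  rewrite mxE /M; lra.
have [ymax Tmax Hmax0] := @exists_max _ T phi Tne.
have [ymin Tmin Hmin0] := @exists_max _ T (fun y => - phi y) Tne.
have Hmax y : y \in T -> y != ymax -> phi y < phi ymax.
  move=> yT ne; rewrite lt_neqAle Hmax0 // andbT.
  by apply: contra ne => /eqP /(inj _ _ yT Tmax) ->.
have Hmin y : y \in T -> y != ymin -> phi ymin < phi y.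
  move=> yT ne; rewrite lt_neqAle -lerN2 Hmin0 // andbT.
  by apply: contra ne => /eqP /esym /(inj _ _ yT Tmin) ->.
exists (fun z => Ordinal (hh_lt b t T f phi ymin ymax t1 Tmin Tmax uT (meas b phi ymin ymax z) z)).
move=> x /=.
rewrite -[X in (X = _ %[mod _])%Z]intz sumMz.
have := gg_eq b t T f phi ymin ymax phiB t1 Tmin Tmax uT Hmin Hmax x.
move=> H; under eq_bigr do rewrite intz. exact: H.
Qed.
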